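(* Let $\mathcal{G}=(\mathcal{V},\mathcal{E},\mathbf{W})$ be a weighted undirected graph with symmetric nonnegative weights, and let $\mathcal{F}=\{\mathcal{C}_1,\dots,\mathcal{C}_{|\mathcal{F}|}\}$ be a partition of $\mathcal{V}$ into pairwise disjoint clusters. Let $x:\mathcal{V}\to\mathbb{R}$ be any graph signal observed on a sampling set $\mathcal{M}\subseteq\mathcal{V}$. Suppose $\|u\|_{\mathcal{E}\setminus\partial\mathcal{F}}\ge 2\|u\|_{\partial\mathcal{F}}$ for every $u:\mathcal{V}\to\mathbb{R}$ with $u[i]=0$ for all $i\in\mathcal{M}$. Then every solution $\hat{x}$ of $$\min_{\tilde{x}:\mathcal{V}\to\mathbb{R}}\|\tilde{x}\|_{\rm TV}\quad\text{subject to}\quad\tilde{x}[i]=x[i]\ \text{for all } i\in\mathcal{M}$$ satisfies $$\|x-\hat{x}\|_{\rm TV}\le 6\min_{a_1,\dots,a_{|\mathcal{F}|}\in\mathbb{R}}\Big\|x-\sum_{l=1}^{|\mathcal{F}|}a_l\mathcal{I}_{\mathcal{C}_l}\Big\|_{\rm TV}.$$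
   Context: $\mathcal{I}_{\mathcal{C}}[i]=1$ if $i\in\mathcal{C}$ and $0$ otherwise. For a set of edges $\mathcal{S}\subseteq\mathcal{E}$ and a signal $x:\mathcal{V}\to\mathbb{R}$, $\|x\|_{\mathcal{S}}=\sum_{\{i,j\}\in\mathcal{S}}W_{i,j}|x[i]-x[j]|$, and $\|x\|_{\rm TV}=\|x\|_{\mathcal{E}}$. The boundary of the partition is $\partial\mathcal{F}=\{\{i,j\}\in\mathcal{E}: i\in\mathcal{C}_l, j\in\mathcal{C}_{l'}, l\neq l'\}$. *)

(* Defs.v *)
From mathcomp Require Import all_boot all_order all_algebra.
Set Implicit Arguments. Unset Strict Implicit. Unset Printing Implicit Defensive.
Import Order.TTheory GRing.Theory Num.Theory.
Local Open Scope ring_scope.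

(* An (unordered) edge set S ⊆ E is given by a symmetric boolean predicate
   S on ordered pairs; the edge {i,j} is in S iff e i j && S i j.
   ||x||_S = sum_{{i,j} in S} W i j |x i - x j|; since every unordered edge
   {i,j} (i <> j) is counted twice as an ordered pair, we multiply by 1/2. *)
Definition edge_norm {R : realFieldType} {V : finType} (e : rel V)
  (W : V -> V -> R) (S : V -> V -> bool) (x : V -> R) : R :=
  2^-1 * \sum_(i : V) \sum_(j : V | e i j && S i j) W i j * `|x i - x j|.

Definition tv_norm {R : realFieldType} {V : finType} (e : rel V)
  (W : V -> V -> R) (x : V -> R) : R := edge_norm e W (fun _ _ => true) x.

Definition boundary {V : finType} (P : {set {set V}}) : V -> V -> bool :=
  fun i j => pblock P i != pblock P j.

Definition interior {V : finType} (P : {set {set V}}) : V -> V -> bool :=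
  fun i j => pblock P i == pblock P j.

Definition indic {R : realFieldType} {V : finType} (C : {set V}) : V -> R :=
  fun i => if i \in C then 1 else 0.

Definition pwconst {R : realFieldType} {V : finType} (P : {set {set V}})
  (a : {set V} -> R) : V -> R :=
  fun i => \sum_(C in P) a C * indic C i.

(* Main.v *)
Require Import Defs.
From mathcomp Require Import all_boot all_order all_algebra.
From mathcomp Require Import ring lra.
Import Order.TTheory GRing.Theory Num.Theory.
Local Open Scope ring_scope.

Section H.
Variables (R : realFieldType) (V : finType) (e : rel V) (W : V -> V -> R).
Hypothesis W0 : forall i j, 0 <= W i j.

Lemma en_tri S (f g h : V -> R) : (forall i, h i = f i + g i) ->
  edge_norm e W S h <= edge_norm e W S f + edge_norm e W S g.
Proof.
move=> hE; rewrite /edge_norm -[_ + _]mulrDr; apply: ler_wpM2l; first by rewrite invr_ge0 ler0n.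
rewrite -[_ + _]big_split; apply: ler_sum => i _ /=; rewrite -[_ + _]big_split; apply: ler_sum => j _ /=.
rewrite -[X in _ <= X]mulrDr; apply: ler_wpM2l => //; rewrite !hE.
have -> : f i + g i - (f j + g j) = (f i - f j) + (g i - g j) by ring.
exact: ler_normD.
Qed.

Lemma en_ge0 S f : 0 <= edge_norm e W S f.
Proof.
rewrite /edge_norm mulr_ge0 ?invr_ge0 ?ler0n //.
apply: sumr_ge0 => i _; apply: sumr_ge0 => j _; exact: mulr_ge0.
Qed.

Lemma en_congr (S : V -> V -> bool) (f g : V -> R) :
  (forall i j, S i j -> `|f i - f j| = `|g i - g j|) ->
  edge_norm e W S f = edge_norm e W S g.
Proof.
move=> h; rewrite /edge_norm; congr (_ * _); apply: eq_bigr => i _.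
by apply: eq_bigr => j /andP [_ Sij]; rewrite h.
Qed.

Lemma en_split (S : V -> V -> bool) f :
  tv_norm e W f = edge_norm e W S f + edge_norm e W (fun i j => ~~ S i j) f.
Proof.
rewrite /tv_norm /edge_norm -mulrDr -big_split; congr (_ * _).
apply: eq_bigr => i _; rewrite (bigID (fun j => S i j)) /=.
by congr (_ + _); apply: eq_bigl => j; rewrite andbT.
Qed.
End H.

Theorem lemma2 (R : realFieldType) (V : finType) (e : rel V)
  (W : V -> V -> R) (P : {set {set V}}) (M : {set V}) (x xhat : V -> R) :
  symmetric e ->
  (forall i j, W i j = W j i) ->
  (forall i j, 0 <= W i j) ->
  partition P [set: V] ->
  (* null space property relative to the partition *)
  (forall u : V -> R, (forall i, i \in M -> u i = 0) ->
     edge_norm e W (interior P) u >= 2 * edge_norm e W (boundary P) u) ->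
  (* xhat solves the TV minimization with constraints on M *)
  (forall i, i \in M -> xhat i = x i) ->
  (forall xt : V -> R, (forall i, i \in M -> xt i = x i) ->
     tv_norm e W xhat <= tv_norm e W xt) ->
  (* bound against the min over piecewise-constant approximations *)
  forall a : {set V} -> R,
    tv_norm e W (fun i => x i - xhat i)
      <= 6 * tv_norm e W (fun i => x i - pwconst P a i).
Proof.
move=> _ _ W0 hP NSP hM opt a.
set z := pwconst P a.
set v := fun i => x i - z i.
set u := fun i => xhat i - x i.
case/and3P: hP => /eqP cov triv _.
have zb : forall i j, interior P i j -> z i = z j.
  move=> i j /eqP hij; rewrite /z /pwconst; apply: eq_bigr => C CP.
  congr (_ * _); rewrite /indic.
  have mi : forall k, k \in pblock P k by move=> k; rewrite mem_pblock cov inE.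
  have key : forall k, (k \in C) = (pblock P k == C).
    move=> k; apply/idP/eqP => [kC|<-]; last exact: mi.
    exact: def_pblock.
  by rewrite !key hij.
have nB : forall f, edge_norm e W (boundary P) f =
   edge_norm e W (fun i j => ~~ interior P i j) f.
  by move=> f; apply: en_congr => i j; rewrite /boundary /interior.
have tvs : forall f, tv_norm e W f =
   edge_norm e W (interior P) f + edge_norm e W (boundary P) f.
  by move=> f; rewrite nB; apply: en_split.
have h1 := opt x (fun _ _ => erefl).
have Ixv : edge_norm e W (interior P) (fun i => - x i) = edge_norm e W (interior P) v.
  apply: en_congr => i j hij; rewrite /v (zb _ _ hij) -normrN; congr `|_|; ring.
have Ixv' : edge_norm e W (interior P) x = edge_norm e W (interior P) v.
  apply: en_congr => i j hij; rewrite /v (zb _ _ hij); congr `|_|; ring.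
have h2 : edge_norm e W (interior P) u <=
   edge_norm e W (interior P) xhat + edge_norm e W (interior P) v.
  by rewrite -Ixv; apply: en_tri => // i; rewrite /u.
have Bu : edge_norm e W (boundary P) (fun i => - u i) = edge_norm e W (boundary P) u.
  apply: en_congr => i j _; rewrite -normrN; congr `|_|; ring.
have h3 : edge_norm e W (boundary P) x <=
   edge_norm e W (boundary P) xhat + edge_norm e W (boundary P) u.
  by rewrite -Bu; apply: en_tri => // i; rewrite /u; ring.
have h4 : 2 * edge_norm e W (boundary P) u <= edge_norm e W (interior P) u.
  by apply: NSP => i hi; rewrite /u hM // subrr.
have h5 : tv_norm e W (fun i => x i - xhat i) = tv_norm e W u.
  apply: en_congr => i j _; rewrite /u -normrN; congr `|_|; ring.
have h6 := @en_ge0 R V e W W0 (boundary P) v.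
have h7 := @en_ge0 R V e W W0 (interior P) v.
rewrite h5 -/v !tvs; move: h1; rewrite !tvs Ixv'; lra.
Qed.
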